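(* Let $n\geq 3$ and $q=p^h$. If $c$ is a codeword of minimum weight of $C(PG(n,q))^\perp$, then $supp(c)$ is contained in a plane of $PG(n,q)$.
   Context: $C(PG(n,q))$ is the $\mathbb{F}_p$-span of the incidence vectors of the hyperplanes of $PG(n,q)$, with coordinates indexed by points. $C^\perp$ is its dual with respect to the standard scalar product over $\mathbb{F}_p$. $supp(c)$ is the set of points at which $c$ is nonzero. *)

(* Defs.v *)
From HB Require Import structures.
From mathcomp Require Import all_boot all_order all_algebra all_field.
Set Implicit Arguments. Unset Strict Implicit. Unset Printing Implicit Defensive.
Import GRing.Theory.
Local Open Scope ring_scope.

(* Projective subspaces of PG(n,q), q = #|F|, of vector dimension k:
   canonical row-space representatives of rank k in F^(n+1). *)
Definition PGsub (F : finFieldType) (n k : nat) : finType :=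
  {A : 'M[F]_(n.+1) | (\rank A == k) && (<<A>>%MS == A)}.

Definition PGpoint (F : finFieldType) (n : nat) := PGsub F n 1.
Definition PGhyperplane (F : finFieldType) (n : nat) := PGsub F n n.
Definition PGplane (F : finFieldType) (n : nat) := PGsub F n 3.

Definition incident (F : finFieldType) (n k : nat) (x : PGpoint F n) (S : PGsub F n k) : bool :=
  (val x <= val S)%MS.

Definition word (F : finFieldType) (n p : nat) := PGpoint F n -> 'F_p.

Definition incvec (F : finFieldType) (n p : nat) (H : PGhyperplane F n) : word F n p :=
  fun x => (incident x H)%:R.

Definition inC (F : finFieldType) (n p : nat) (c : word F n p) : Prop :=
  exists a : PGhyperplane F n -> 'F_p,
    forall x, c x = \sum_(H : PGhyperplane F n) a H * incvec p H x.

Definition dotw (F : finFieldType) (n p : nat) (c d : word F n p) : 'F_p :=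
  \sum_(x : PGpoint F n) c x * d x.

Definition inCperp (F : finFieldType) (n p : nat) (c : word F n p) : Prop :=
  forall d : word F n p, inC d -> dotw c d = 0.

Definition supp (F : finFieldType) (n p : nat) (c : word F n p) : {set PGpoint F n} :=
  [set x | c x != 0].

Definition wt (F : finFieldType) (n p : nat) (c : word F n p) : nat := #|supp c|.

Definition min_weight_Cperp (F : finFieldType) (n p : nat) (c : word F n p) : Prop :=
  [/\ inCperp c, supp c != set0 &
      forall d : word F n p, inCperp d -> supp d != set0 -> (wt c <= wt d)%N].

(* Main.v *)
Require Import Defs.
From HB Require Import structures.
From mathcomp Require Import all_boot all_order all_algebra all_field.
From mathcomp Require Import zify.
Set Implicit Arguments. Unset Strict Implicit. Unset Printing Implicit Defensive.
Import GRing.Theory.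
Local Open Scope ring_scope.

Section Geom.
Variables (F : finFieldType) (n : nat).
Local Notation pt := (PGpoint F n).

Lemma subP_rank k (S : PGsub F n k) : \rank (val S) = k.
Proof. by case: S => A /= /andP[/eqP]. Qed.

Lemma subP_gen k (S : PGsub F n k) : <<val S>>%MS = val S.
Proof. by case: S => A /= /andP[_ /eqP]. Qed.

Lemma eqmx_rank_le m1 m2 (A : 'M[F]_(m1, n.+1)) (B : 'M[F]_(m2, n.+1)) :
  (A <= B)%MS -> (\rank B <= \rank A)%N -> (A :=: B)%MS.
Proof.
by move=> sAB r; apply/eqmxP; rewrite -(mxrank_leqif_eq sAB).2 eqn_leq r mxrankS.
Qed.

Lemma sub_eq k (S T : PGsub F n k) : (val S <= val T)%MS -> S = T.
Proof.
move=> le; apply: val_inj; rewrite -subP_gen -[val T]subP_gen; apply: eq_genmx.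
by apply: eqmx_rank_le => //; rewrite !subP_rank.
Qed.

Definition mk k (d : PGsub F n k) m (A : 'M[F]_(m, n.+1)) : PGsub F n k :=
  odflt d (insub <<A>>%MS).

Lemma mkE k d m (A : 'M[F]_(m, n.+1)) : \rank A = k -> (val (@mk k d m A) :=: A)%MS.
Proof.
move=> rA.
have h : (\rank <<A>>%MS == k) && (<<<<A>>%MS>>%MS == <<A>>%MS).
  by rewrite genmxE rA genmx_id !eqxx.
rewrite /mk; case: insubP => [u _ -> /=|]; first exact: genmxE.
by rewrite h.
Qed.

Lemma mk_eq k d m (A : 'M[F]_(m, n.+1)) (S : PGsub F n k) :
  \rank A = k -> (A <= val S)%MS -> @mk k d m A = S.
Proof. by move=> rA le; apply: sub_eq; rewrite mkE. Qed.

Lemma pt_rank (x : pt) : \rank (val x) = 1%N.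
Proof. exact: subP_rank. Qed.

Lemma rank1_add m1 m2 (A : 'M[F]_(m1, n.+1)) (B : 'M[F]_(m2, n.+1)) :
  \rank B = 1%N -> ~~ (B <= A)%MS -> \rank (A + B)%MS = (\rank A).+1.
Proof.
move=> rB nBA.
have c0 : \rank (A :&: B)%MS = 0%N.
  have le : (\rank (A :&: B)%MS <= 1)%N by rewrite -rB mxrankS ?capmxSr.
  move: le; rewrite leq_eqVlt ltnS leqn0 => /orP[/eqP e|/eqP //].
  have := mxrank_leqif_sup (capmxSr A B); rewrite e rB => -[_].
  rewrite eqxx => /esym sBc; case/negP: nBA; apply: submx_trans sBc _.
  exact: capmxSl.
by have := mxrank_sum_cap A B; rewrite c0 addn0 rB addn1.
Qed.

Lemma cap_rank m1 m2 (A : 'M[F]_(m1, n.+1)) (B : 'M[F]_(m2, n.+1)) :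
  \rank (A :&: B)%MS = (\rank A + \rank B - \rank (A + B)%MS)%N.
Proof. by rewrite -mxrank_sum_cap addKn. Qed.

Lemma ex_pt m1 m2 (U : 'M[F]_(m1, n.+1)) (A : 'M[F]_(m2, n.+1)) :
  ~~ (U <= A)%MS -> exists x : pt, (val x <= U)%MS && ~~ (val x <= A)%MS.
Proof.
case/row_subPn => i hi.
have nz : row i U != 0 by apply: contraNneq hi => ->; rewrite sub0mx.
have h : (\rank <<row i U>>%MS == 1%N) && (<<<<row i U>>%MS>>%MS == <<row i U>>%MS).
  by rewrite genmxE rank_rV nz genmx_id !eqxx.
exists (exist _ <<row i U>>%MS h : pt); rewrite /= !genmxE hi andbT; exact: row_sub.
Qed.

Definition pts m (U : 'M[F]_(m, n.+1)) : {set pt} := [set x : pt | (val x <= U)%MS].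

Lemma pt_in_rank1 m (U : 'M[F]_(m, n.+1)) (x y : pt) :
  \rank U = 1%N -> (val x <= U)%MS -> (val y <= U)%MS -> x = y.
Proof.
move=> rU hx hy; apply: sub_eq; apply: submx_trans hx _.
by have := eqmx_rank_le hy; rewrite rU pt_rank => /(_ (leqnn _)) <-.
Qed.

Lemma pts_rank1 m (U : 'M[F]_(m, n.+1)) (x0 : pt) : \rank U = 1%N -> pts U = [set mk x0 U].
Proof.
move=> rU; apply/setP => y; rewrite !inE; apply/idP/eqP => [le | ->].
  by apply: (pt_in_rank1 rU) => //; rewrite mkE.
by rewrite mkE.
Qed.

Lemma pts_rank0 m (U : 'M[F]_(m, n.+1)) : \rank U = 0%N -> pts U = set0.
Proof.
move=> rU; apply/setP => y; rewrite !inE; apply/negP => le.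
by have := mxrankS le; rewrite rU pt_rank.
Qed.


Lemma mk_scale k d m (A : 'M[F]_(m, n.+1)) a : a != 0 -> @mk k d m (a *: A) = mk d A.
Proof. by move=> a0; rewrite /mk (eq_genmx (eqmx_scale _ a0)). Qed.

Lemma mk_inj1 (d : pt) (w1 w2 : 'rV[F]_(n.+1)) : w1 != 0 -> w2 != 0 ->
  mk d w1 = mk d w2 -> exists a, w1 = a *: w2.
Proof.
move=> n1 n2 e; apply/sub_rVP.
have r1 : \rank w1 = 1%N by rewrite rank_rV n1.
have r2 : \rank w2 = 1%N by rewrite rank_rV n2.
by rewrite -(mkE d r1) e (mkE d r2).
Qed.

Lemma pt_vec (x : pt) : exists2 w : 'rV[F]_(n.+1), w != 0 & (w :=: val x)%MS.
Proof.
have : ~~ (val x <= (0 : 'M[F]_(n.+1)))%MS.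
  by apply/negP => /mxrankS; rewrite mxrank0 pt_rank.
case/row_subPn => i hi; exists (row i (val x)).
  by apply: contraNneq hi => ->; rewrite sub0mx.
apply: eqmx_rank_le; first exact: row_sub.
rewrite pt_rank rank_rV lt0b; apply: contraNneq hi => ->; exact: sub0mx.
Qed.

Lemma card_pts_rank2 m (U : 'M[F]_(m, n.+1)) : \rank U = 2%N -> #|pts U| = #|F|.+1.
Proof.
move=> rU.
have : ~~ (U <= (0 : 'M[F]_(n.+1)))%MS.
  by apply/negP => /mxrankS; rewrite mxrank0 rU.
case/row_subPn => i; have := row_sub i U; move: (row i U) => u su hi.
have u0 : u != 0 by apply: contraNneq hi => ->; rewrite sub0mx.
have ru : \rank u = 1%N by rewrite rank_rV u0.
have : ~~ (U <= u)%MS by apply/negP => /mxrankS; rewrite rU ru.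
case/row_subPn => j; have := row_sub j U; move: (row j U) => v sv hj.
have v0 : v != 0 by apply: contraNneq hj => ->; rewrite sub0mx.
have rv : \rank v = 1%N by rewrite rank_rV v0.
have indep : forall a b, a *: u + b *: v = 0 -> a = 0 /\ b = 0.
  move=> a b e; have b0 : b = 0.
    apply/eqP; move: hj; apply: contraNT => b0.
    apply/sub_rVP; exists (- (a / b)).
    have ev : b *: v = - (a *: u) by apply/eqP; rewrite -addr_eq0 addrC e.
    by rewrite -[v](scalerK b0) ev scalerN scalerA mulrC scaleNr.
  split => //; move: e; rewrite b0 scale0r addr0 => /eqP.
  by rewrite scalemx_eq0 (negPf u0) orbF => /eqP.
have lin2 : forall a b c e, a *: u + b *: v = c *: u + e *: v -> a = c /\ b = e.
  move=> a b c e h; have := indep (a - c) (b - e).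
  rewrite !scalerBl addrACA -opprD h subrr => /(_ erefl) [/eqP + /eqP].
  by rewrite !subr_eq0 => /eqP -> /eqP ->.
have : ~~ (U <= (0 : 'M[F]_(n.+1)))%MS.
  by apply/negP => /mxrankS; rewrite mxrank0 rU.
case/ex_pt => d _.
have nzS : forall t, v + t *: u != 0.
  move=> t; apply/eqP => e; have := indep t 1.
  by rewrite scale1r addrC e => /(_ erefl) [_ /eqP]; rewrite oner_eq0.
pose f (o : option F) : pt := if o is Some t then mk d (v + t *: u) else mk d u.
have huv : (u + v :=: U)%MS.
  apply: eqmx_rank_le; first by rewrite addsmx_sub su.
  by rewrite rU (rank1_add rv hj) ru.
have -> : pts U = f @: setT.
  apply/setP => x; rewrite inE; apply/idP/imsetP => [xU|[o _ ->]].
    have [w w0 ew] := pt_vec x.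
    have wU : (w <= u + v)%MS by rewrite huv ew.
    case/sub_addsmxP: wU => [[a1 a2] /= ew2].
    rewrite (mx11_scalar a1) (mx11_scalar a2) !mul_scalar_mx in ew2.
    have xw : x = mk d w.
      by apply/esym/mk_eq; [rewrite rank_rV w0 | rewrite ew].
    case: (eqVneq (a2 0 0) 0) => [b0|b0].
      have a0 : a1 0 0 != 0.
        by apply: contraNneq w0 => a0; rewrite ew2 a0 b0 !scale0r addr0.
      exists None => //; by rewrite xw /f ew2 b0 scale0r addr0 mk_scale.
    exists (Some (a1 0 0 / a2 0 0)) => //.
    rewrite xw /f -(mk_scale _ _ (invr_neq0 b0)) ew2 scalerDr !scalerA mulVf //.
    by rewrite scale1r addrC mulrC.
  case: o => [t|] /=.
    rewrite mkE ?rank_rV ?nzS //; apply: addmx_sub => //; exact: scalemx_sub.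
  by rewrite mkE // rank_rV u0.
rewrite card_imset ?cardsT ?card_option //.
have nzf : forall o, (if o is Some t then v + t *: u else u) != 0 by case.
have fE : forall o, f o = mk d (if o is Some t then v + t *: u else u) by case.
move=> o1 o2; rewrite !fE => /(mk_inj1 (nzf o1) (nzf o2)) [l]; case: o1 o2 => [t|] [s|] //= e.
- have [h1 h2] : t = l * s /\ (1 = l :> F).
    by apply: (lin2 t 1 (l * s) l); rewrite scale1r addrC e scalerDr scalerA addrC.
  by rewrite h1 -h2 mul1r.
- have [_ /eqP] : t = l /\ (1 = 0 :> F).
    by apply: (lin2 t 1 l 0); rewrite scale1r addrC e scale0r addr0.
  by rewrite oner_eq0.
- have [h1 h2] : (1 = l * s :> F) /\ (0 = l :> F).
    by apply: (lin2 1 0 (l * s) l); rewrite scale1r scale0r addr0 {1}e scalerDr scalerA addrC.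
  by move: h1; rewrite -h2 mul0r => /eqP; rewrite oner_eq0.
Qed.

Definition subOf_proof k m (A : 'M[F]_(m, n.+1)) (h : \rank A = k) :
  (\rank <<A>>%MS == k) && (<<<<A>>%MS>>%MS == <<A>>%MS).
Proof. by rewrite genmxE h genmx_id !eqxx. Qed.

Definition subOf k m (A : 'M[F]_(m, n.+1)) (h : \rank A = k) : PGsub F n k :=
  exist _ <<A>>%MS (subOf_proof h).

Lemma subOfE k m (A : 'M[F]_(m, n.+1)) (h : \rank A = k) : (val (subOf h) :=: A)%MS.
Proof. exact: genmxE. Qed.

Lemma pts_eqmx m1 m2 (A : 'M[F]_(m1, n.+1)) (B : 'M[F]_(m2, n.+1)) :
  (A :=: B)%MS -> pts A = pts B.
Proof. by move=> e; apply/setP => x; rewrite !inE e. Qed.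

Lemma addpt_sub m (A : 'M[F]_(m, n.+1)) (x y : pt) :
  ~~ (val y <= A)%MS ->
  (val x <= A + val y)%MS = (val x <= A)%MS || (val y <= A + val x)%MS.
Proof.
move=> nyA; case: (boolP (val x <= A)%MS) => xA /=.
  by rewrite (submx_trans xA) ?addsmxSl.
have rx := rank1_add (pt_rank x) xA; have ry := rank1_add (pt_rank y) nyA.
apply/idP/idP => h.
  have e : (A + val x :=: A + val y)%MS.
    by apply: eqmx_rank_le; [rewrite addsmx_sub addsmxSl h | rewrite rx ry].
  by rewrite e addsmxSr.
have e : (A + val y :=: A + val x)%MS.
  by apply: eqmx_rank_le; [rewrite addsmx_sub addsmxSl h | rewrite rx ry].
by rewrite e addsmxSr.
Qed.

Lemma pt_neq_add (x y : pt) : x != y -> ~~ (val y <= val x)%MS.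
Proof. by apply: contra => /sub_eq ->. Qed.

Lemma rank_line (x y : pt) : x != y -> \rank (val x + val y)%MS = 2%N.
Proof. by move=> ne; rewrite rank1_add ?pt_rank ?pt_neq_add. Qed.

Lemma ex_pt_small m (A : 'M[F]_(m, n.+1)) : (\rank A < n.+1)%N ->
  exists x : pt, ~~ (val x <= A)%MS.
Proof.
move=> rA; have : ~~ ((1%:M : 'M[F]_(n.+1)) <= A)%MS.
  by apply/negP => /mxrankS; rewrite mxrank1 leqNgt rA.
by case/ex_pt => x /andP[_ h]; exists x.
Qed.

Lemma line_sub_eq (x y : pt) m (M : 'M[F]_(m, n.+1)) : x != y ->
  (val x <= M)%MS -> (val y <= M)%MS -> (\rank M <= 2)%N -> (val x + val y :=: M)%MS.
Proof.
move=> xy xM yM rM; apply: eqmx_rank_le; first by rewrite addsmx_sub xM.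
by rewrite rank_line.
Qed.

Lemma ex_pt_in m (U : 'M[F]_(m, n.+1)) : (0 < \rank U)%N -> exists x : pt, (val x <= U)%MS.
Proof.
move=> rU; have : ~~ (U <= (0 : 'M[F]_(n.+1)))%MS.
  by apply/negP => /mxrankS; rewrite mxrank0 leqNgt rU.
by case/ex_pt => x /andP[h _]; exists x.
Qed.

Lemma ex_plane m (L : 'M[F]_(m, n.+1)) : (1 < n)%N -> \rank L = 2%N ->
  exists pi : PGplane F n, (L <= val pi)%MS.
Proof.
move=> n1 rL; have h : (\rank L < n.+1)%N by rewrite rL ltnS.
have [w wL] := ex_pt_small h.
have r3 : \rank (L + val w)%MS = 3%N by rewrite rank1_add ?pt_rank // rL.
by exists (subOf r3); rewrite subOfE addsmxSl.
Qed.

End Geom.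

Section Code.
Variables (F : finFieldType) (n p : nat).
Hypothesis Hp : prime p.
Hypothesis HpF : p \in [pchar F].
Local Notation pt := (PGpoint F n).
Local Notation word := (word F n p).

Lemma cardF_dvd : (p %| #|F|)%N.
Proof.
have := card_pprimeChar HpF => /= h.
have -> : #|F| = #|pPrimeCharType HpF| by [].
rewrite h; case E: (logn _ _) => [|k]; last by rewrite expnS dvdn_mulr.
exfalso; move: h; rewrite E expn0 => h.
have : (1 < #|F|)%N by apply/card_gt1P; exists 0, 1; rewrite !inE eq_sym oner_neq0.
by rewrite -[X in (_ < X)%N]/#|pPrimeCharType HpF| h.
Qed.

Lemma qF : (#|F|%:R : 'F_p) = 0.
Proof. by apply/eqP; rewrite -(dvdn_pcharf (pchar_Fp Hp)) cardF_dvd. Qed.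

Lemma mulrn_q1 (a : 'F_p) : a *+ #|F|.+1 = a.
Proof. by rewrite mulrSr -mulr_natr qF mulr0 add0r. Qed.

Lemma perp_hyp (c : word) : inCperp c ->
  forall H : PGhyperplane F n, \sum_(x in pts (val H)) c x = 0.
Proof.
move=> hc H.
have -> : \sum_(x in pts (val H)) c x = dotw c (incvec p H).
  rewrite /dotw big_mkcond; apply: eq_bigr => x _.
  by rewrite /incvec inE /incident; case: ifP => _; rewrite ?mulr1 ?mulr0.
apply: hc; exists (fun H' => (H' == H)%:R) => x.
rewrite (bigD1 H) //= eqxx mul1r big1 ?addr0 // => H' /negPf ->; by rewrite mul0r.
Qed.

Lemma perp_hypA (c : word) m (A : 'M[F]_(m, n.+1)) : inCperp c -> \rank A = n ->
  \sum_(x in pts A) c x = 0.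
Proof. by move=> hc rA; rewrite -(pts_eqmx (subOfE rA)) (perp_hyp hc). Qed.

Lemma perp_of (w : word) :
  (forall H : PGhyperplane F n, \sum_(x in pts (val H)) w x = 0) -> inCperp w.
Proof.
move=> h d [a ha]; rewrite /dotw.
under eq_bigr do rewrite ha mulr_sumr.
rewrite exchange_big /=; apply: big1 => H _.
transitivity (a H * \sum_(x in pts (val H)) w x); last by rewrite h mulr0.
rewrite mulr_sumr [RHS]big_mkcond; apply: eq_bigr => x _.
by rewrite /incvec inE /incident; case: ifP; rewrite ?mulr1 ?mulr0 // mulrC.
Qed.

Lemma sum_mkset (a : 'F_p) (P : pred pt) :
  \sum_(y | P y) a = a *+ #|[set y | P y]|.
Proof. by rewrite -sumr_const; apply: eq_bigl => y; rewrite inE. Qed.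

Lemma sum_all (c : word) : inCperp c -> (0 < n)%N -> \sum_x c x = 0.
Proof.
move=> hc n0.
pose L : 'M[F]_(n.+1) := pid_mx 2.
have rL : \rank L = 2%N by rewrite rank_pid_mx.
pose W := L^C%MS.
have rW : \rank W = n.-1 by rewrite mxrank_compl rL subSS subn1.
have LW0 : forall y : pt, (val y <= L)%MS -> ~~ (val y <= W)%MS.
  move=> y yL; apply/negP => yW.
  have : (val y <= L :&: W)%MS by rewrite sub_capmx yL yW.
  by rewrite capmx_compl => /mxrankS; rewrite mxrank0 pt_rank.
have full : forall m (B : 'M[F]_(m, n.+1)), (W <= B)%MS -> \rank (B + L)%MS = n.+1.
  move=> m B WB; apply/eqP; rewrite eqn_leq rank_leq_col /=.
  have := addsmx_compl_full L; rewrite /row_full => /eqP e.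
  rewrite -[X in (X <= _)%N]e mxrankS // addsmx_sub addsmxSr /=.
  exact: submx_trans WB (addsmxSl _ _).
have hyp : forall y : pt, (val y <= L)%MS -> \rank (W + val y)%MS = n.
  by move=> y yL; rewrite rank1_add ?pt_rank ?LW0 // rW prednK.
have : \sum_(y in pts L) \sum_(x in pts (W + val y)%MS) c x = 0.
  by apply: big1 => y; rewrite inE => yL; apply: perp_hypA; rewrite ?hyp.
under eq_bigr do rewrite big_mkcond /=.
rewrite exchange_big /= => h; apply: etrans h; apply: eq_bigr => x _; symmetry.
under eq_bigr do rewrite inE.
rewrite -big_mkcondr /= sum_mkset.
case: (boolP (val x <= W)%MS) => xW.
  have -> : [set y | (y \in pts L) && (val x <= W + val y)%MS] = pts L.
    by apply/setP => y; rewrite !inE (submx_trans xW) ?addsmxSl ?andbT.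
  by rewrite card_pts_rank2 // mulrn_q1.
have -> : [set y | (y \in pts L) && (val x <= W + val y)%MS] = pts ((W + val x) :&: L)%MS.
  apply/setP => y; rewrite !inE sub_capmx andbC.
  case: (boolP (val y <= L)%MS) => yL; rewrite ?andbF //=.
  by rewrite addpt_sub ?LW0 // (negPf xW).
rewrite (pts_rank1 x) ?cards1 //.
rewrite cap_rank full ?addsmxSl // rank1_add ?pt_rank // rW prednK // rL.
by rewrite addn2 subSn // subnn.
Qed.



Lemma sum_ind m (A : 'M[F]_(m, n.+1)) m' (L : 'M[F]_(m', n.+1)) :
  \sum_(x in pts A) ((val x <= L)%MS%:R : 'F_p) = (#|pts (A :&: L)%MS|)%:R.
Proof.
rewrite (eq_bigr (fun x => if (val x <= L)%MS then 1 else 0)); last by move=> x _; case: ifP.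
rewrite -big_mkcondr /= sum_mkset.
have -> : [set y | (y \in pts A) && (val y <= L)%MS] = pts (A :&: L)%MS.
  by apply/setP => x; rewrite !inE sub_capmx.
by [].
Qed.

Lemma hyp_line m (H : 'M[F]_(m, n.+1)) m' (L : 'M[F]_(m', n.+1)) :
  \rank H = n -> \rank L = 2%N -> ((#|pts (H :&: L)%MS|)%:R : 'F_p) = 1.
Proof.
move=> rH rL; have le1 : (n <= \rank (H + L)%MS)%N.
  by rewrite -[X in (X <= _)%N]rH mxrankS ?addsmxSl.
have le2 : (\rank (H + L)%MS <= n.+1)%N by apply: rank_leq_col.
move: le1; rewrite leq_eqVlt => /orP[/eqP e|].
  rewrite card_pts_rank2; first by rewrite mulrSr qF add0r.
  by rewrite cap_rank -e rH rL addKn.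
move=> lt; have e : \rank (H + L)%MS = n.+1 by apply/eqP; rewrite eqn_leq le2.
have [x _] : exists x : pt, true.
  have h0 : (\rank (0 : 'M[F]_(n.+1))%R < n.+1)%N by rewrite mxrank0.
  by have [x _] := ex_pt_small h0; exists x.
rewrite (pts_rank1 x) ?cards1 //.
by rewrite cap_rank e rH rL addn2 subSn // subnn.
Qed.

Lemma small_word : (1 < n)%N ->
  exists w : word, [/\ inCperp w, supp w != set0 & (wt w <= #|F| + #|F|)%N].
Proof.
move=> n1.
have h0 : (\rank (0 : 'M[F]_(n.+1))%R < n.+1)%N by rewrite mxrank0.
have [R _] := ex_pt_small h0.
have h1 : (\rank (val R) < n.+1)%N by rewrite pt_rank ltnS (ltnW n1).
have [a aR] := ex_pt_small h1.
have aR' : a != R by apply: contraNneq aR => ->.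
pose L1 := (val R + val a)%MS.
have rL1 : \rank L1 = 2%N by rewrite rank_line // eq_sym.
have h2 : (\rank L1 < n.+1)%N by rewrite rL1 ltnS.
have [b bL] := ex_pt_small h2.
have bR : b != R by apply: contraNneq bL => ->; rewrite addsmxSl.
pose L2 := (val R + val b)%MS.
have rL2 : \rank L2 = 2%N by rewrite rank_line // eq_sym.
pose w : word := fun x => ((val x <= L1)%MS%:R - (val x <= L2)%MS%:R).
exists w; split.
- apply: perp_of => H; rewrite sumrB !sum_ind !hyp_line ?subrr //; exact: subP_rank.
- apply/set0Pn; exists b; rewrite inE /w (negPf bL) addsmxSr /= mulr0n sub0r oppr_eq0.
  exact: oner_neq0.
- rewrite /wt; pose A := (pts L1 :\ R) :|: (pts L2 :\ R).
  apply: (@leq_trans #|A|).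
    apply: subset_leq_card; apply/subsetP => x; rewrite !inE /w.
    case: (eqVneq x R) => [->|xR] /=; first by rewrite !addsmxSl subrr eqxx.
    by case: ((val x <= L1)%MS); case: ((val x <= L2)%MS); rewrite ?subrr ?eqxx.
  apply: leq_trans (leq_card_setU _ _) _.
  have h : forall L : 'M[F]_(n.+1), \rank L = 2%N -> (val R <= L)%MS ->
      #|pts L :\ R| = #|F|.
    move=> L rL RL; have := cardsD1 R (pts L).
    by rewrite [in R \in _]inE RL card_pts_rank2 // add1n => -[].
  by rewrite !h ?addsmxSl.
Qed.

Lemma sum_ne0 (c : word) (A : {set pt}) : \sum_(x in A) c x != 0 ->
  exists x, (x \in A) && (c x != 0).
Proof.
move=> h; apply/existsP; apply: contraNT h => /existsPn hx.
apply/eqP; apply: big1 => x xA; by move: (hx x); rewrite xA /= negbK => /eqP.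
Qed.

Lemma pure (c : word) : min_weight_Cperp c -> (0 < n)%N ->
  forall P : pt, c P = 0 ->
  forall x1 x2 : pt, c x1 != 0 -> c x2 != 0 -> x1 != x2 ->
  (val P <= val x1 + val x2)%MS ->
  forall x0 : pt, c x0 != 0 ->
  exists2 x : pt, (c x != 0) && (x != x0) & (val x <= val P + val x0)%MS.
Proof.
move=> [hc nz hmin] n0 P cP x1 x2 c1 c2 x12 Px12 x0 c0.
case: (boolP [exists x, [&& c x != 0, x != x0 & (val x <= val P + val x0)%MS]]).
  by case/existsP => x /and3P[h1 h2 h3]; exists x => //; rewrite h1 h2.
move/existsPn => tang; exfalso.
have ctang : forall x, c x != 0 -> (val x <= val P + val x0)%MS -> x = x0.
  move=> x cx xP; apply/eqP; apply: contraNT (tang x) => nx.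
  by rewrite cx nx xP.
have neP : forall x, c x != 0 -> x != P by move=> x cx; apply: contraNneq cx => ->; rewrite cP.
pose Pi : 'M[F]_(n.+1) := (val P)^C%MS.
have rPi : \rank Pi = n by rewrite mxrank_compl pt_rank subSS subn0.
have PPi0 : (val P :&: Pi)%MS = 0 by apply: capmx_compl.
have nPPi : ~~ (val P <= Pi)%MS.
  apply/negP => h; have : (val P <= val P :&: Pi)%MS by rewrite sub_capmx submx_refl h.
  by rewrite PPi0 => /mxrankS; rewrite mxrank0 pt_rank.
have yPi : forall y : pt, (val y <= Pi)%MS -> ~~ (val y <= val P)%MS.
  by move=> y yPi; apply: contra nPPi => /sub_eq <-.
have rfull : forall m (B : 'M[F]_(m, n.+1)), (val P <= B)%MS -> \rank (B + Pi)%MS = n.+1.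
  move=> m B PB; apply/eqP; rewrite eqn_leq rank_leq_col /=.
  have e := mxrank_disjoint_sum PPi0; rewrite pt_rank rPi add1n in e.
  rewrite -[X in (X <= _)%N]e mxrankS //.
  by rewrite addsmx_sub addsmxSr (submx_trans PB) ?addsmxSl.
have rpi : forall x : pt, x != P -> \rank ((val P + val x) :&: Pi)%MS = 1%N.
  move=> x xP; rewrite cap_rank rank_line 1?eq_sym // rPi rfull ?addsmxSl //.
  by rewrite add2n subSn // subnn.
pose pi (x : pt) : pt := mk P ((val P + val x) :&: Pi)%MS.
have piE : forall x, x != P -> (val (pi x) :=: (val P + val x) :&: Pi)%MS.
  by move=> x xP; apply: mkE; apply: rpi.
have piPi : forall x, x != P -> (val (pi x) <= Pi)%MS.
  by move=> x xP; rewrite piE // capmxSr.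
have piPx : forall x, x != P -> (val (pi x) <= val P + val x)%MS.
  by move=> x xP; rewrite piE // capmxSl.
have xPpi : forall x, x != P -> (val x <= val P + val (pi x))%MS.
  move=> x xP; rewrite addpt_sub ?yPi ?piPi // piPx // orbT //.
have piU : forall x (y : pt), x != P -> (val y <= Pi)%MS ->
    (val x <= val P + val y)%MS -> y = pi x.
  move=> x y xP yP xy; apply: (pt_in_rank1 (rpi x xP)); last by rewrite -piE.
  rewrite sub_capmx yP andbT; move: xy; rewrite (addpt_sub x (yPi y yP)).
  have nxP : ~~ (val x <= val P)%MS by apply: pt_neq_add; rewrite eq_sym.
  by rewrite (negbTE nxP).
pose c' : word := fun y =>
  if (val y <= Pi)%MS then \sum_(x in pts (val P + val y)%MS) c x else 0.
have hc' : inCperp c'.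
  apply: perp_of => H.
  have rH := subP_rank H.
  have e1 : \sum_(y in pts (val H)) c' y =
            \sum_(y in pts (val H :&: Pi)%MS) \sum_(x in pts (val P + val y)%MS) c x.
    rewrite [LHS]big_mkcond [RHS]big_mkcond; apply: eq_bigr => y _.
    by rewrite /c' !inE sub_capmx; case: (val y <= val H)%MS; case: (val y <= Pi)%MS.
  rewrite e1; under eq_bigr do rewrite big_mkcond /=.
  rewrite exchange_big /=.
  have e2 : forall x, \sum_(y in pts (val H :&: Pi)%MS)
       (if x \in pts (val P + val y)%MS then c x else 0) =
       if (val (pi x) <= val H)%MS then c x else 0.
    move=> x; case: (eqVneq x P) => [->|xP].
      by rewrite cP; case: ifP => _; apply: big1 => y _; case: ifP.
    under eq_bigr do rewrite inE.
    rewrite -big_mkcondr /= sum_mkset.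
    case: (boolP (val (pi x) <= val H)%MS) => piH.
      have -> : [set y | (y \in pts (val H :&: Pi)%MS) && (val x <= val P + val y)%MS]
          = [set pi x].
        apply/setP => y; rewrite !inE sub_capmx.
        apply/idP/eqP => [/andP[/andP[_ yP] xy]|->]; first exact: piU.
        by rewrite piH piPi // xPpi.
      by rewrite cards1.
    have -> : [set y | (y \in pts (val H :&: Pi)%MS) && (val x <= val P + val y)%MS]
        = set0.
      apply/setP => y; rewrite !inE sub_capmx.
      apply/negP => /andP[/andP[yH yP] xy].
      by move: piH; rewrite -(piU x y xP yP xy) yH.
    by rewrite cards0.
  under eq_bigr do rewrite e2.
  case: (boolP (Pi <= val H)%MS) => PiH.
    apply: etrans (sum_all hc n0); apply: eq_bigr => x _.
    case: (eqVneq x P) => [->|xP]; first by rewrite cP; case: ifP.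
    by rewrite (submx_trans (piPi x xP) PiH).
  pose W := (val H :&: Pi)%MS.
  have rHPi : \rank (val H + Pi)%MS = n.+1.
    apply/eqP; rewrite eqn_leq rank_leq_col /= ltnNge; apply: contra PiH => le.
    have e : (val H :=: val H + Pi)%MS.
      by apply: eqmx_rank_le; rewrite ?addsmxSl // rH.
    by rewrite e addsmxSr.
  have rW : \rank W = n.-1.
    by rewrite /W cap_rank rH rPi rHPi -[n.+1]addn1 subnDl subn1.
  have nPW : ~~ (val P <= W)%MS.
    by apply: contra nPPi => h; apply: submx_trans h (capmxSr _ _).
  have rH' : \rank (W + val P)%MS = n.
    by rewrite rank1_add ?pt_rank // rW prednK.
  have modl : ((W + val P) :&: Pi :=: W)%MS.
    apply: eqmx_trans (eqmx_sym (matrix_modl _ (capmxSr _ _))) _.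
    by rewrite PPi0; apply: addsmx0.
  apply: etrans (perp_hypA hc rH'); rewrite [RHS]big_mkcond; apply: eq_bigr => x _.
  case: (eqVneq x P) => [->|xP]; first by rewrite cP; case: ifP; case: ifP.
  rewrite inE; congr (if _ then _ else _); apply/idP/idP => h.
    apply: submx_trans (xPpi x xP) _; rewrite addsmx_sub addsmxSr /=.
    by apply: submx_trans (addsmxSl _ _); rewrite sub_capmx h piPi.
  have : (val (pi x) <= (W + val P) :&: Pi)%MS.
    rewrite sub_capmx piPi // andbT; apply: submx_trans (piPx x xP) _.
    by rewrite addsmx_sub addsmxSr h.
  by rewrite modl => /submx_trans; apply; apply: capmxSl.
have x0P := neP x0 c0.
have nz' : supp c' != set0.
  apply/set0Pn; exists (pi x0); rewrite inE /c' piPi //.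
  have e : (val P + val (pi x0) :=: val P + val x0)%MS.
    apply: eqmx_rank_le; first by rewrite addsmx_sub addsmxSl piPx.
    by rewrite rank_line 1?eq_sym // rank1_add ?pt_rank ?yPi ?piPi.
  rewrite (pts_eqmx e) (bigD1 x0) /=; last by rewrite inE addsmxSr.
  rewrite big1 ?addr0 // => x /andP[]; rewrite inE => xin xx0.
  by apply/eqP; apply: contraNT xx0 => cx; apply/eqP; exact: ctang.
have sub : supp c' \subset pi @: supp c.
  apply/subsetP => y; rewrite inE /c'; case: ifP => yP; last by rewrite eqxx.
  case/sum_ne0 => x /andP[]; rewrite inE => xy cx.
  apply/imsetP; exists x; first by rewrite inE.
  exact: piU (neP x cx) yP xy.
have x1P := neP x1 c1.
have e1 : (val P + val x1 :=: val x1 + val x2)%MS.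
  apply: eqmx_rank_le; first by rewrite addsmx_sub Px12 addsmxSl.
  by rewrite !rank_line // eq_sym.
have pi12 : pi x2 = pi x1.
  apply: (pt_in_rank1 (rpi x1 x1P)); last by rewrite -piE.
  rewrite sub_capmx piPi ?neP // andbT; apply: submx_trans (piPx x2 (neP x2 c2)) _.
  by rewrite addsmx_sub addsmxSl e1 addsmxSr.
have hlt : (#|pi @: supp c| < #|supp c|)%N.
  have x2S : x2 \in supp c by rewrite inE.
  rewrite (cardsD1 x2 (supp c)) x2S add1n ltnS.
  apply: leq_trans (leq_imset_card pi (supp c :\ x2)).
  apply: subset_leq_card; apply/subsetP => y /imsetP[x xS ->].
  case: (eqVneq x x2) => [->|xx2]; last by apply/imsetP; exists x; rewrite // in_setD1 xx2 xS.
  by apply/imsetP; exists x1; rewrite // in_setD1 x12 inE.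
have := hmin c' hc' nz'; rewrite /wt => h.
have := leq_trans h (subset_leq_card sub).
by rewrite leqNgt hlt.
Qed.

Lemma claim1 (c : word) : min_weight_Cperp c -> (0 < n)%N ->
  forall P x y z w : pt, c P = 0 -> c x != 0 -> c y != 0 -> x != y ->
  (val P <= val x + val y)%MS -> c z != 0 -> ~~ (val z <= val x + val y)%MS ->
  (val w <= (val x + val y) + val z)%MS -> ~~ (val w <= val x + val y)%MS ->
  exists2 s : pt, (c s != 0) && (s != x) & (val s <= val x + val w)%MS.
Proof.
move=> hm n0 P x y z w cP cx cy xy PL cz zL wS wL.
set L := (val x + val y)%MS in PL zL wS wL.
case: (boolP [exists s, [&& c s != 0, s != x & (val s <= val x + val w)%MS]]).
  by case/existsP => s /and3P[h1 h2 h3]; exists s => //; rewrite h1 h2.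
move/existsPn => tang; exfalso.
have ctang : forall s, c s != 0 -> (val s <= val x + val w)%MS -> s = x.
  move=> s cs sP; apply/eqP; apply: contraNT (tang s) => nx.
  by rewrite cs nx sP.
have neP : forall s, c s != 0 -> s != P by move=> s cs; apply: contraNneq cs => ->; rewrite cP.
have xL : (val x <= L)%MS by apply: addsmxSl.
have rL : \rank L = 2%N by rewrite rank_line.
have r3 : \rank (L + val z)%MS = 3%N by rewrite rank1_add ?pt_rank // rL.
have Pz : P != z by rewrite eq_sym neP.
have xw : x != w by apply: contraNneq wL => <-.
have M1S : (val P + val z <= L + val z)%MS.
  by rewrite addsmx_sub addsmxSr (submx_trans PL) ?addsmxSl.
have M2S : (val x + val w <= L + val z)%MS.
  by rewrite addsmx_sub wS (submx_trans xL) ?addsmxSl.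
have rcap : (0 < \rank ((val P + val z) :&: (val x + val w))%MS)%N.
  rewrite cap_rank !rank_line //.
  have : (\rank ((val P + val z) + (val x + val w))%MS <= 3)%N.
    by rewrite -r3 mxrankS // addsmx_sub M1S M2S.
  by move=> h; rewrite subn_gt0 (leq_ltn_trans h).
have [Q] := ex_pt_in rcap; rewrite sub_capmx => /andP[QM1 QM2].
have Qx : Q != x.
  apply/eqP => eQ; move: QM1; rewrite eQ => xPz.
  have e : (val P + val x :=: val P + val z)%MS.
    apply: eqmx_rank_le; first by rewrite addsmx_sub addsmxSl xPz.
    have Px : P != x by rewrite eq_sym neP.
    by rewrite (rank_line Pz) (rank_line Px).
  have : (val z <= L)%MS.
    apply: submx_trans (addsmxSr (val P) _) _.
    by rewrite -e addsmx_sub PL xL.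
  by rewrite (negPf zL).
have cQ : c Q = 0.
  by apply/eqP; apply: contraNT Qx => cQ; apply/eqP; apply: ctang.
have [s /andP[cs sz] sPz] := pure hm n0 cP cx cy xy PL cz.
have zs : z != s by rewrite eq_sym.
have e2 : (val z + val s :=: val P + val z)%MS.
  apply: eqmx_rank_le; first by rewrite addsmx_sub addsmxSr sPz.
  by rewrite (rank_line Pz) (rank_line zs).
have Qzs : (val Q <= val z + val s)%MS by rewrite e2.
have [s' /andP[cs' s'x] s'Q] := pure hm n0 cQ cz cs zs Qzs cx.
have : (val s' <= val x + val w)%MS.
  by apply: submx_trans s'Q _; rewrite addsmx_sub QM2 addsmxSl.
by move/(ctang s' cs') => e; rewrite e eqxx in s'x.
Qed.

Lemma claim2 (c : word) : min_weight_Cperp c -> (0 < n)%N ->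
  forall P x y z : pt, c P = 0 -> c x != 0 -> c y != 0 -> x != y ->
  (val P <= val x + val y)%MS -> c z != 0 -> ~~ (val z <= val x + val y)%MS ->
  (#|F| <= #|[set s | [&& c s != 0%R, (val s <= (val x + val y) + val z)%MS &
                          ~~ (val s <= val x + val y)%MS]]|)%N.
Proof.
move=> hm n0 P x y z cP cx cy xy PL cz zL.
set L := (val x + val y)%MS in PL zL *.
have xL : (val x <= L)%MS by apply: addsmxSl.
have yL : (val y <= L)%MS by apply: addsmxSr.
have rL : \rank L = 2%N by rewrite rank_line.
have r3 : \rank (L + val z)%MS = 3%N by rewrite rank1_add ?pt_rank // rL.
have yz : y != z by apply: contraNneq zL => <-.
pose N := (val y + val z)%MS.
have rN : \rank N = 2%N by rewrite rank_line.
have NS : (N <= L + val z)%MS by rewrite addsmx_sub addsmxSr (submx_trans yL) ?addsmxSl.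
have xN : ~~ (val x <= N)%MS.
  apply/negP => xN'.
  have e : (val y + val x :=: N)%MS.
    apply: line_sub_eq; [by rewrite eq_sym | exact: addsmxSl | exact: xN' | by rewrite rN].
  have : (val z <= L)%MS.
    by apply: submx_trans (addsmxSr (val y) _) _; rewrite -e addsmx_sub yL xL.
  by rewrite (negPf zL).
pose D := pts N :\ y.
have cD : #|D| = #|F|.
  have := cardsD1 y (pts N); rewrite [in y \in _]inE addsmxSl card_pts_rank2 //.
  by rewrite add1n => -[].
have wprop : forall w, w \in D ->
    [/\ (val w <= N)%MS, (val w <= L + val z)%MS & ~~ (val w <= L)%MS].
  move=> w; rewrite !inE => /andP[wy wN]; split => //; first exact: submx_trans NS.
  apply/negP => wL'.
  have rNL : \rank (N :&: L)%MS = 1%N.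
    have e : (N + L :=: L + val z)%MS.
      apply: eqmx_rank_le; first by rewrite addsmx_sub NS addsmxSl.
      by rewrite mxrankS // addsmx_sub addsmxSr (submx_trans (addsmxSr (val y) (val z))) ?addsmxSl.
    by rewrite cap_rank e r3 rN rL.
  have := pt_in_rank1 rNL (x := w) (y := y).
  by rewrite !sub_capmx wN wL' yL addsmxSl => /(_ erefl erefl) /eqP; rewrite (negPf wy).
pose f (w : pt) : pt := odflt x [pick s | [&& c s != 0, s != x & (val s <= val x + val w)%MS]].
have fP : forall w, w \in D ->
    [&& c (f w) != 0, f w != x & (val (f w) <= val x + val w)%MS].
  move=> w wD; have [wN wS wL] := wprop w wD.
  rewrite /f; case: pickP => [s hs|none] //=.
  have [s /andP[h1 h2] h3] := claim1 hm n0 cP cx cy xy PL cz zL wS wL.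
  by move: (none s); rewrite h1 h2 h3.
have xw : forall w, w \in D -> x != w.
  by move=> w /wprop[_ _ wL]; apply: contraNneq wL => <-.
have fline : forall w, w \in D -> (val x + val (f w) :=: val x + val w)%MS.
  move=> w wD; have /and3P[_ fx fxw] := fP w wD.
  apply: line_sub_eq; [by rewrite eq_sym fx | exact: addsmxSl | exact: fxw |].
  by rewrite (rank_line (xw w wD)).
apply: (@leq_trans #|f @: D|).
  rewrite -cD card_in_imset ?leqnn // => w1 w2 w1D w2D e.
  have [w1N w1S _] := wprop w1 w1D; have [w2N _ _] := wprop w2 w2D.
  have l1 := fline w1 w1D; have l2 := fline w2 w2D.
  have w2l : (val w2 <= val x + val w1)%MS by rewrite -l1 e l2 addsmxSr.
  have r3' : \rank ((val x + val w1) + N)%MS = 3%N.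
    apply/eqP; rewrite eqn_leq; apply/andP; split.
      rewrite -r3 mxrankS // addsmx_sub NS andbT addsmx_sub w1S andbT.
      exact: submx_trans xL (addsmxSl _ _).
    have := rank1_add (pt_rank x) xN; rewrite rN => <-.
    by rewrite mxrankS // addsmx_sub addsmxSr (submx_trans (addsmxSl (val x) (val w1))) ?addsmxSl.
  have r1 : \rank ((val x + val w1) :&: N)%MS = 1%N.
    by rewrite cap_rank r3' rN (rank_line (xw w1 w1D)).
  apply: (pt_in_rank1 r1); rewrite sub_capmx ?w1N ?w2N ?w2l ?addsmxSr //.
apply: subset_leq_card; apply/subsetP => s /imsetP[w wD ->].
have [wN wS wL] := wprop w wD.
have /and3P[h1 h2 h3] := fP w wD.
rewrite inE h1 (submx_trans h3) /=; last by rewrite addsmx_sub wS (submx_trans xL) ?addsmxSl.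
apply/negP => fL.
have : (val w <= L)%MS.
  apply: submx_trans (addsmxSr (val x) _) _.
  by rewrite -(fline w wD) addsmx_sub xL fL.
by rewrite (negPf wL).
Qed.

Lemma cardsU_disj (T : finType) (A B : {set T}) : A :&: B = set0 ->
  #|A :|: B| = (#|A| + #|B|)%N.
Proof. by move=> h; rewrite cardsU h cards0 subn0. Qed.

Lemma planar (c : word) : min_weight_Cperp c -> (2 < n)%N ->
  exists pi : PGplane F n, forall x, x \in supp c -> incident x pi.
Proof.
move=> hm n2; have n1 : (1 < n)%N by apply: ltnW.
have n0 : (0 < n)%N by apply: ltnW.
have [hc nz hmin] := hm.
have d2q : (#|supp c| <= #|F| + #|F|)%N.
  have [w [hw nzw ww]] := small_word n1.
  exact: leq_trans (hmin w hw nzw) ww.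
have [x] := set0Pn _ nz; rewrite inE => cx.
have [y /andP[cy yx]] : exists y, (c y != 0) && (y != x).
  case: (boolP [exists y, (c y != 0) && (y != x)]) => [/existsP //|/existsPn hy].
  exfalso; have := sum_all hc n0; rewrite (bigD1 x) //= big1 ?addr0 => [e|z zx].
    by move: cx; rewrite e eqxx.
  apply/eqP; move: (hy z); rewrite zx andbT; by case: (c z == 0).
have planeL : forall (L : 'M[F]_(n.+1)), \rank L = 2%N ->
    (forall z, c z != 0 -> (val z <= L)%MS) ->
    exists pi : PGplane F n, forall x, x \in supp c -> incident x pi.
  move=> L rL hL; have [pi Lpi] := ex_plane n1 rL.
  by exists pi => z; rewrite inE /incident => cz; apply: submx_trans (hL z cz) Lpi.
case: (boolP [exists x', exists y', exists P,
   [&& c x' != 0, c y' != 0, x' != y', c P == 0 & (val P <= val x' + val y')%MS]]).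
  case/existsP => x1; case/existsP => y1; case/existsP => P /and5P[c1 c2 x12 /eqP cP P12].
  set L := (val x1 + val y1)%MS in P12 *.
  have rL : \rank L = 2%N by rewrite (rank_line x12).
  have xL : (val x1 <= L)%MS by apply: addsmxSl.
  have yL : (val y1 <= L)%MS by apply: addsmxSr.
  case: (boolP [forall z, (c z != 0) ==> (val z <= L)%MS]).
    by move/forallP => h; apply: (planeL L rL) => z cz; move: (h z); rewrite cz.
  case/forallPn => z0; rewrite negb_imply => /andP[cz0 z0L].
  have r3 : \rank (L + val z0)%MS = 3%N by rewrite rank1_add ?pt_rank // rL.
  exists (subOf r3) => z; rewrite inE /incident subOfE => cz.
  case: (boolP (val z <= L + val z0)%MS) => // zs; exfalso.
  have zL : ~~ (val z <= L)%MS by apply: contra zs => h; apply: submx_trans h (addsmxSl _ _).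
  pose T (z' : pt) := [set s | [&& c s != 0%R, (val s <= L + val z')%MS & ~~ (val s <= L)%MS]].
  have T0 := claim2 hm n0 cP c1 c2 x12 P12 cz0 z0L.
  have T1 := claim2 hm n0 cP c1 c2 x12 P12 cz zL.
  rewrite -/L -/(T z0) in T0; rewrite -/L -/(T z) in T1.
  have r4 : \rank ((L + val z0) + val z)%MS = 4%N by rewrite rank1_add ?pt_rank // r3.
  have dis : T z0 :&: T z = set0.
    apply/setP => s; rewrite !inE; apply/negP => /andP[/and3P[_ s0 sL] /and3P[_ s1 _]].
    have rc : (\rank ((L + val z0) :&: (L + val z))%MS <= 2)%N.
      rewrite cap_rank r3 rank1_add ?pt_rank // rL.
      have : (4 <= \rank ((L + val z0) + (L + val z))%MS)%N.
        rewrite -r4 mxrankS // addsmx_sub addsmxSl /=.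
        by apply: submx_trans (addsmxSr L _) (addsmxSr _ _).
      by move=> h; have h' := leq_add h (leqnn 2); rewrite leq_subLR addnC.
    have e : (L :=: (L + val z0) :&: (L + val z))%MS.
      by apply: eqmx_rank_le; [rewrite sub_capmx !addsmxSl | rewrite rL].
    by move: sL; rewrite e sub_capmx s0 s1.
  have dis2 : [set x1; y1] :&: (T z0 :|: T z) = set0.
    apply/setP => s; rewrite !inE; apply/negP => /andP[/orP[] /eqP -> /orP[] /and3P[_ _]];
      by rewrite ?xL ?yL.
  have sub : [set x1; y1] :|: (T z0 :|: T z) \subset supp c.
    apply/subsetP => s; rewrite !inE => /orP[/orP[] /eqP ->|/orP[] /and3P[cs _ _]] //.
  have := subset_leq_card sub; rewrite (cardsU_disj dis2) (cardsU_disj dis) cards2 x12.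
  move=> h; have := leq_trans h d2q.
  have : (#|F| + #|F| < 2 + (#|T z0| + #|T z|))%N.
    by rewrite add2n ltnS; apply: leq_trans (leq_add T0 T1) (leqnSn _).
  by move=> h1 h2; have := leq_ltn_trans h2 h1; rewrite ltnn.
move/existsPn => noP.
have secS : forall x' y' P, c x' != 0 -> c y' != 0 -> x' != y' ->
    (val P <= val x' + val y')%MS -> c P != 0.
  move=> x' y' P c1 c2 x12 Pl; apply/negP => /eqP cP.
  move: (noP x') => /existsPn /(_ y') /existsPn /(_ P).
  by rewrite c1 c2 x12 cP eqxx Pl.
have xy : x != y by rewrite eq_sym.
set L := (val x + val y)%MS.
have rL : \rank L = 2%N by rewrite (rank_line xy).
case: (boolP [forall z, (c z != 0) ==> (val z <= L)%MS]).
  by move/forallP => h; apply: (planeL L rL) => z cz; move: (h z); rewrite cz.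
case/forallPn => z; rewrite negb_imply => /andP[cz zL].
have xz : x != z by apply: contraNneq zL => <-; apply: addsmxSl.
have r3 : \rank (L + val z)%MS = 3%N by rewrite rank1_add ?pt_rank // rL.
pose M := (val x + val z)%MS.
have rM : \rank M = 2%N by rewrite (rank_line xz).
have s1 : pts L \subset supp c.
  by apply/subsetP => s; rewrite !inE => sL; apply: secS cx cy xy sL.
have s2 : pts M \subset supp c.
  by apply/subsetP => s; rewrite !inE => sM; apply: secS cx cz xz sM.
have ri : \rank (L :&: M)%MS = 1%N.
  have e : (L + M :=: L + val z)%MS.
    apply: eqmx_rank_le.
      rewrite addsmx_sub addsmxSl /= addsmx_sub addsmxSr andbT.
      exact: submx_trans (addsmxSl (val x) (val y)) (addsmxSl _ _).
    rewrite mxrankS // addsmx_sub addsmxSl /=.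
    exact: submx_trans (addsmxSr (val x) (val z)) (addsmxSr _ _).
  by rewrite cap_rank e r3 rL rM.
have ci : (#|pts L :&: pts M| <= 1)%N.
  rewrite -(cards1 (mk x (L :&: M)%MS)) -(pts_rank1 x ri); apply: subset_leq_card.
  by apply/subsetP => s; rewrite !inE sub_capmx.
have sU : pts L :|: pts M \subset supp c by rewrite subUset s1 s2.
have := subset_leq_card sU; rewrite cardsU !card_pts_rank2 //.
move: ci d2q; move: #|pts L :&: pts M| #|supp c| #|F| => k d q.
clear; lia.
Qed.

End Code.

Unset Implicit Arguments.

Theorem mainTheorem16 (F : finFieldType) (p : nat) (n : nat)
  (Hp : prime p) (HpF : (p \in [pchar F])%R) (Hn : (3 <= n)%N)
  (c : word F n p) :
  min_weight_Cperp c ->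
  exists pi : PGplane F n, forall x : PGpoint F n, x \in supp c -> incident x pi.
Proof.
by move=> hm; apply: (@planar F n p Hp HpF c hm Hn).
Qed.
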